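(* Fix $k\in\mathbb{N}$, positive constants $b_0,b_1,b_2,\lambda_0,\lambda_1$ and $\mu\in(0,1)$. There exists $C>0$ depending only on $b_0,b_1,\lambda_0,\lambda_1,\mu$ (and the fixed $k$) such that the following holds. Let $T\geq10$, $\ell<r$, $a^\pm\in\mathbb{R}^k$, $g:[\ell,r]\to\mathbb{R}$ Lipschitz with $g(\ell)=g(r)=0$, and $P\subset(\ell,\ell+T^{1/2})$ finite (with $P\subset(\ell,r)$). Suppose that $r-\ell\leq b_0T$, $|P|\leq b_0T$, $|g(x)-g(y)|\leq b_1T|x-y|$ for all $x,y$, $a^\pm_j-a^\pm_{j+1}\geq\lambda_0T^{1/2}$ for $j\in\{1,\dots,k-1\}$, $a^-_k-g(\ell)\geq\lambda_1T$, $a^+_k-g(r)\geq\lambda_1T$, $a^-_1-g(\ell)\leq b_2T^2$, $a^+_1-g(r)\leq b_2T^2$. Then $\mathbb{P}_{\mathrm{free}}(\mathsf{H})\geq C^{-1}e^{-CT^{5/2}}$.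
   Context: $\mathbb{P}_{\mathrm{free}}$ denotes the law of $k$ independent Brownian bridges (diffusion parameter one) $\mathcal{L}=(\mathcal{L}_1,\dots,\mathcal{L}_k)$ on $[\ell,r]$ with $\mathcal{L}_j(\ell)=a^-_j$, $\mathcal{L}_j(r)=a^+_j$. $\mathsf{H}$ is the event that $\mathcal{L}_j(p)-\mathcal{L}_{j+1}(p)\geq\mu\lambda_0T^{1/2}$ for all $p\in P$ and $j\in\{1,\dots,k-1\}$, and $\mathcal{L}_k(p)-g(p)\geq\mu\lambda_1T$ for all $p\in P$. *)

(* Defs.v *)
From HB Require Import structures.
From mathcomp Require Import all_boot all_order all_algebra.
From mathcomp Require Import all_classical all_reals all_analysis.
Set Implicit Arguments. Unset Strict Implicit. Unset Printing Implicit Defensive.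
Import Order.TTheory GRing.Theory Num.Theory.
Local Open Scope ring_scope.

Section BB.
Variable R : realType.

Definition heat (t y : R) : R := expR (- (y ^+ 2) / (2 * t)) / Num.sqrt (2 * pi * t).

(* A configuration: x j i = value of curve j (1 <= j <= k) at the i-th point of P. *)
Definition config := nat -> nat -> R.

Definition upd (x : config) (j i : nat) (y : R) : config :=
  fun j' i' => if (j' == j) && (i' == i) then y else x j' i'.

Fixpoint iint (s : seq (nat * nat)) (F : config -> \bar R) (x : config) : \bar R :=
  match s with
  | [::] => F x
  | (j, i) :: s' => (\int[@lebesgue_measure R]_(y in setT) iint s' F (upd x j i y))%E
  end.

Definition tgrid (l r : R) (P : seq R) (i : nat) : R :=
  if i == 0%N then l else if (i <= size P)%N then nth 0 P i.-1 else r.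

(* Values of curve j on the grid: a^-_j, x j 0, ..., x j (m-1), a^+_j. *)
Definition xgrid (P : seq R) (am ap : nat -> R) (x : config) (j i : nat) : R :=
  if i == 0%N then am j else if (i <= size P)%N then x j i.-1 else ap j.

(* Finite-dimensional density at the (strictly increasing) times P of a
   Brownian bridge (diffusion parameter 1) on [l,r] from am j to ap j. *)
Definition bridge_density (l r : R) (P : seq R) (am ap : nat -> R) (x : config) (j : nat) : R :=
  (\prod_(i < (size P).+1)
     heat (tgrid l r P i.+1 - tgrid l r P i) (xgrid P am ap x j i.+1 - xgrid P am ap x j i))
  / heat (r - l) (ap j - am j).

Definition eventH (k : nat) (mu lam0 lam1 T : R) (g : R -> R) (P : seq R) (x : config) : bool :=
  all (fun i =>
         all (fun j => mu * lam0 * Num.sqrt T <= x j i - x j.+1 i) (iota 1 k.-1)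
         && (mu * lam1 * T <= x k i - g (nth 0 P i)))
      (iota 0 (size P)).

Definition coords (k m : nat) : seq (nat * nat) :=
  flatten [seq [seq (j, i) | i <- iota 0 m] | j <- iota 1 k].

(* P_free(H): law of k independent Brownian bridges on [l,r] from a^- to a^+. *)
Definition Pfree_H (k : nat) (l r : R) (am ap : nat -> R) (mu lam0 lam1 T : R)
  (g : R -> R) (P : seq R) : \bar R :=
  iint (coords k (size P))
    (fun x => (if eventH k mu lam0 lam1 T g P x
               then \prod_(1 <= j < k.+1) bridge_density l r P am ap x j else 0)%:E)
    (fun _ _ => 0).

End BB.

(* Main.v *)
Require Import Defs.
From HB Require Import structures.
From mathcomp Require Import all_boot all_order all_algebra.
From mathcomp Require Import all_classical all_reals all_analysis.
From mathcomp Require Import ring lra zify.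
Import Order.TTheory GRing.Theory Num.Theory.
Local Open Scope ring_scope.
Local Open Scope classical_set_scope.

Lemma int_lb (R : realType) (f : R -> \bar R) (a b c : R) :
  (forall y, (0 <= f y)%E) -> a <= b -> 0 <= c ->
  (forall y, a <= y <= b -> (c%:E <= f y)%E) ->
  ((c * (b - a))%:E <= \int[@lebesgue_measure R]_(y in setT) f y)%E.
Proof.
move=> f0 ab c0 fc.
have mA : measurable (`[a, b]%classic : set R) by [].
have -> : ((c * (b - a))%:E = \int[@lebesgue_measure R]_(y in `[a, b]) (cst c%:E) y)%E.
  rewrite integral_cst //.
  have := lebesgue_measure_itv `[a, b]%R; rewrite /= lte_fin => ->.
  case: ltP => [_|ba]; first by rewrite EFinM EFinB.
  have -> : b = a by apply/eqP; rewrite eq_le ab ba.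
  by rewrite subrr mulr0 mule0.
rewrite integral_mkcond.
rewrite !ge0_integralTE //; last first.
  by move=> x; rewrite /patch; case: ifP => // _; rewrite lee_fin.
apply: ereal_sup_le => _ [h /= hle <-]; exists h => //= x.
apply: le_trans (hle x) _.
rewrite /patch; case: ifPn => [|_]; last exact: f0.
by rewrite inE /= in_itv /= => /fc.
Qed.

Lemma iint_cat (R : realType) (s1 s2 : seq (nat * nat)) (F : config R -> \bar R) x :
  iint s1 (iint s2 F) x = iint (s1 ++ s2) F x.
Proof.
elim: s1 x => [//|[j i] s1 IH] x /=.
by congr (integral _ _ _); apply/funext => y; rewrite IH.
Qed.

Lemma iint_ge0 (R : realType) (s : seq (nat * nat)) (F : config R -> \bar R) x :
  (forall x, (0 <= F x)%E) -> (0 <= iint s F x)%E.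
Proof.
move=> F0; elim: s x => [//|[j i] s IH] x /=.
by apply: integral_ge0 => y _; exact: IH.
Qed.

Lemma upd_eq (R : realType) (x : config R) j i y : upd x j i y j i = y.
Proof. by rewrite /upd !eqxx. Qed.

Lemma upd_neqj (R : realType) (x : config R) j i y j' i' : j' != j -> upd x j i y j' i' = x j' i'.
Proof. by rewrite /upd => /negbTE ->. Qed.

Lemma upd_neqi (R : realType) (x : config R) j i y j' i' : i' != i -> upd x j i y j' i' = x j' i'.
Proof. by rewrite /upd => /negbTE ->; rewrite andbF. Qed.

Lemma bd_ext (R : realType) l r P am ap (x x' : config R) j :
  (forall i, x j i = x' j i) ->
  bridge_density l r P am ap x j = bridge_density l r P am ap x' j.
Proof.
move=> h; rewrite /bridge_density.
suff -> : xgrid P am ap x j = xgrid P am ap x' j by [].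
by apply/funext => i; rewrite /xgrid h.
Qed.

Lemma heat_gt0 (R : realType) (t y : R) : 0 < t -> 0 < heat t y.
Proof.
move=> t0; rewrite /heat divr_gt0 ?expR_gt0 // sqrtr_gt0.
by rewrite mulr_gt0 // mulr_gt0 // pi_gt0.
Qed.

Lemma heat_ge0 (R : realType) (t y : R) : 0 <= heat t y.
Proof. by rewrite /heat divr_ge0 ?sqrtr_ge0 // ltW // expR_gt0. Qed.

Lemma heat_mul (R : realType) (t S a b : R) : 0 < t -> 0 < S ->
  heat t a * heat S b =
  heat (t + S) (a + b) * heat (t * S / (t + S)) (a - t * (a + b) / (t + S)).
Proof.
move=> t0 S0; have V0 : 0 < t + S by rewrite addr_gt0.
have pi0 := pi_gt0 R.
rewrite /heat mulf_div [in RHS]mulf_div -!expRD.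
congr (expR _ / _).
  by field; rewrite ?lt0r_neq0 ?mulr_gt0 // lt0r_neq0.
rewrite -!sqrtrM ?mulr_ge0 ?ltW ?divr_gt0 ?mulr_gt0 //.
by congr Num.sqrt; field; rewrite lt0r_neq0.
Qed.

Lemma gauss_step (R : realType) (t S X ap Y0 Y1 d L y : R) :
  0 < t -> 0 < S -> 0 < d -> 0 <= L ->
  `|X - Y0| <= d ->
  `|Y0 + t * (ap - Y0) / (t + S) - Y1| <= 2 * L * (t * S / (t + S)) ->
  let sg := Num.sqrt (t * S / (t + S)) in
  let sg' := Num.min sg d in
  let q := S / (t + S) * (X - Y0) * (1 - sg' / (2 * d)) in
  `|y - (Y1 + q)| <= sg' / 2 ->
  `|y - Y1| <= d /\
  heat (t + S) (ap - X) * (expR (- 1 - 4 * L ^+ 2 * t) / (Num.sqrt (2 * pi) * sg))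
    <= heat t (y - X) * heat S (ap - y).
Proof.
move=> t0 S0 d0 L0 hu hD sg sg' q hy.
have V0 : 0 < t + S by rewrite addr_gt0.
set s2 := t * S / (t + S).
have s20 : 0 < s2 by rewrite divr_gt0 ?mulr_gt0.
have sg0 : 0 < sg by rewrite sqrtr_gt0.
have sgsq : sg ^+ 2 = s2 by rewrite sqr_sqrtr // ltW.
have sg'0 : 0 < sg' by rewrite lt_min sg0 d0.
have sg'sg : sg' <= sg by rewrite ge_min lexx.
have sg'd : sg' <= d by rewrite ge_min lexx orbT.
have SV0 : 0 <= S / (t + S) by rewrite divr_ge0 // ltW.
have SV1 : S / (t + S) <= 1 by rewrite ler_pdivrMr // mul1r lerDr ltW.
have s2t : s2 <= t.
  by rewrite /s2 -mulrA ler_piMr // ltW.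
set u := X - Y0.
have th0 : 0 <= 1 - sg' / (2 * d).
  rewrite subr_ge0 ler_pdivrMr ?mulr_gt0 //; lra.
have th1 : 1 - sg' / (2 * d) <= 1.
  rewrite lerBlDr lerDl divr_ge0 // ?ltW ?mulr_gt0 //.
have hq : `|q| <= d - sg' / 2.
  rewrite /q normrM normrM (ger0_norm SV0) (ger0_norm th0).
  idtac.
  have : S / (t + S) * `|u| <= d.
    apply: le_trans (_ : 1 * `|u| <= d); last by rewrite mul1r.
    by rewrite ler_wpM2r.
  have -> : d - sg' / 2 = d * (1 - sg' / (2 * d)).
    by field; rewrite lt0r_neq0.
  move=> h; apply: ler_wpM2r => //.
have hq2 : `|q - S / (t + S) * u| <= sg' / 2.
  have -> : q - S / (t + S) * u = - (S / (t + S) * u * (sg' / (2 * d))).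
    by rewrite /q /u; ring.
  rewrite normrN normrM normrM (ger0_norm SV0) (@ger0_norm _ (sg' / (2 * d))); last first.
    by rewrite divr_ge0 ?ltW ?mulr_gt0.
  have -> : sg' / 2 = d * (sg' / (2 * d)) by field; rewrite lt0r_neq0.
  apply: ler_wpM2r; first by rewrite divr_ge0 ?ltW ?mulr_gt0.
  apply: le_trans (_ : 1 * `|u| <= d); last by rewrite mul1r.
  by rewrite ler_wpM2r.
split.
  have -> : y - Y1 = (y - (Y1 + q)) + q by ring.
  apply: le_trans (ler_normD _ _) _; lra.
rewrite heat_mul //.
have -> : y - X + (ap - y) = ap - X by ring.
apply: ler_wpM2l; first exact/ltW/heat_gt0.
set z := y - X - t * (ap - X) / (t + S).
set D := Y0 + t * (ap - Y0) / (t + S) - Y1.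
have hz : z = (y - (Y1 + q)) + (q - S / (t + S) * u) - D.
  by rewrite /z /D /u; field; rewrite lt0r_neq0.
have hza : `|z| <= sg + 2 * L * s2.
  rewrite hz; apply: le_trans (ler_normB _ _) _.
  apply: le_trans (lerD (ler_normD _ _) (lexx _)) _.
  have : `|D| <= 2 * L * s2 by [].
  lra.
have hz2 : z ^+ 2 <= 2 * s2 + 8 * L ^+ 2 * s2 ^+ 2.
  have h0 : 0 <= sg + 2 * L * s2 by nra.
  have : z ^+ 2 <= (sg + 2 * L * s2) ^+ 2.
    by move: hza; rewrite ler_norml => /andP [h1 h2]; nra.
  have := sqr_ge0 (sg - 2 * L * s2); nra.
rewrite /heat.
have -> : Num.sqrt (2 * pi * s2) = Num.sqrt (2 * pi) * sg.
  by rewrite sqrtrM // mulr_ge0 // ltW // pi_gt0.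
apply: ler_wpM2r; first by rewrite invr_ge0 mulr_ge0 // ?sqrtr_ge0 ?ltW.
rewrite ler_expR.
have : z ^+ 2 / (2 * s2) <= 1 + 4 * L ^+ 2 * t.
  rewrite ler_pdivrMr ?mulr_gt0 //.
  have : L ^+ 2 * s2 <= L ^+ 2 * t by rewrite ler_wpM2l ?sqr_ge0.
  have := sqr_ge0 (sg - 2 * L * s2); nra.
  by rewrite invr_gt0.
rewrite -/s2 => h.
have -> : - z ^+ 2 / (2 * s2) = - (z ^+ 2 / (2 * s2)) by rewrite mulNr.
lra.
Qed.

Definition rowc (j i n : nat) : seq (nat * nat) := [seq (j, i') | i' <- iota i n].

Definition Qf {R : realType} (l r : R) (P : seq R) (am ap : nat -> R) (x : config R) (j i : nat) : R :=
  (\prod_(i' < i) heat (tgrid l r P i'.+1 - tgrid l r P i')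
                       (xgrid P am ap x j i'.+1 - xgrid P am ap x j i'))
  * heat (r - tgrid l r P i) (ap j - xgrid P am ap x j i) / heat (r - l) (ap j - am j).

Lemma tgrid_end (R : realType) (l r : R) P : tgrid l r P (size P).+1 = r.
Proof. by rewrite /tgrid /= ltnn. Qed.

Lemma xgrid_end (R : realType) P (am ap : nat -> R) x j : xgrid P am ap x j (size P).+1 = ap j.
Proof. by rewrite /xgrid /= ltnn. Qed.

Lemma Qf_end (R : realType) (l r : R) P am ap x j :
  Qf l r P am ap x j (size P) = bridge_density l r P am ap x j.
Proof.
rewrite /Qf /bridge_density big_ord_recr /= tgrid_end xgrid_end.
by [].
Qed.

Lemma Qf_0 (R : realType) (l r : R) P am ap x j : l < r ->
  Qf l r P am ap x j 0 = 1.
Proof.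
move=> lr; rewrite /Qf big_ord0 mul1r /tgrid /xgrid /= divff //.
by rewrite lt0r_neq0 // heat_gt0 // subr_gt0.
Qed.

Lemma xgrid_upd_le (R : realType) P (am ap : nat -> R) x j i y n : (n <= i)%N ->
  xgrid P am ap (upd x j i y) j n = xgrid P am ap x j n.
Proof.
move=> ni; rewrite /xgrid; case: ifP => // n0; case: ifP => // _.
rewrite upd_neqi //; case: n ni n0 => // n /= ni _.
by rewrite neq_ltn ni.
Qed.

Lemma xgrid_upd_eq (R : realType) P (am ap : nat -> R) x j i y : (i < size P)%N ->
  xgrid P am ap (upd x j i y) j i.+1 = y.
Proof. by move=> iP; rewrite /xgrid /= iP upd_eq. Qed.

Lemma Qf_upd (R : realType) (l r : R) P am ap x j i y : (i < size P)%N ->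
  Qf l r P am ap (upd x j i y) j i.+1 =
  (\prod_(i' < i) heat (tgrid l r P i'.+1 - tgrid l r P i')
                       (xgrid P am ap x j i'.+1 - xgrid P am ap x j i'))
  * (heat (tgrid l r P i.+1 - tgrid l r P i) (y - xgrid P am ap x j i)
  * heat (r - tgrid l r P i.+1) (ap j - y)) / heat (r - l) (ap j - am j).
Proof.
move=> iP; rewrite /Qf big_ord_recr /= xgrid_upd_eq // xgrid_upd_le //.
rewrite -!mulrA; congr (_ * _).
apply: eq_bigr => i' _.
by rewrite !xgrid_upd_le // ?(ltnW (ltn_ord i')) // ltn_ord.
Qed.

Lemma row_lb (R : realType) (l r : R) (P : seq R) (am ap : nat -> R) (j : nat)
  (G : config R -> \bar R) (A : config R -> R) (O : config R -> Prop)
  (B : nat -> R -> Prop) (kap : nat -> R) :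
  l < r ->
  (forall x i y, A (upd x j i y) = A x) -> (forall x, 0 <= A x) ->
  (forall x i y, O x -> O (upd x j i y)) ->
  (forall x, (0 <= G x)%E) ->
  (forall x, O x -> (forall i, (i < size P)%N -> B i (x j i)) ->
     ((A x * bridge_density l r P am ap x j)%:E <= G x)%E) ->
  (forall i, 0 <= kap i) ->
  (forall i X, (i < size P)%N -> (i = 0%N -> X = am j) -> ((0 < i)%N -> B i.-1 X) ->
     exists a b, a < b /\ forall y, a <= y <= b -> B i y /\
       heat (r - tgrid l r P i) (ap j - X) * kap i <=
       (b - a) * (heat (tgrid l r P i.+1 - tgrid l r P i) (y - X) *
                  heat (r - tgrid l r P i.+1) (ap j - y))) ->
  forall n i, (i + n = size P)%N -> forall x, O x -> (forall i', (i' < i)%N -> B i' (x j i')) ->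
  ((A x * Qf l r P am ap x j i * \prod_(i <= i' < size P) kap i')%:E
     <= iint (rowc j i n) G x)%E.
Proof.
move=> lr Aupd A0 Oupd G0 HG kap0 Hstep.
elim=> [|n IH] i.
  rewrite addn0 => -> x Ox Bx /=.
  by rewrite big_geq // mulr1 Qf_end; apply: HG.
move=> inm x Ox Bx.
have im : (i < size P)%N by rewrite -inm; lia.
rewrite /rowc /= -/(rowc j i.+1 n).
set X := xgrid P am ap x j i.
have [a [b [altb Hab]]] : exists a b, a < b /\ forall y, a <= y <= b -> B i y /\
       heat (r - tgrid l r P i) (ap j - X) * kap i <=
       (b - a) * (heat (tgrid l r P i.+1 - tgrid l r P i) (y - X) *
                  heat (r - tgrid l r P i.+1) (ap j - y)).
  apply: Hstep => //.
  - by move=> i0; rewrite /X i0.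
  - move=> i0; rewrite /X /xgrid; case: i {inm IH X} Bx im i0 => [//|i] Bx im _ /=.
    rewrite (ltnW im) /=; exact: Bx.
have h0 : 0 < heat (r - l) (ap j - am j) by rewrite heat_gt0 // subr_gt0.
rewrite [X in (_ <= X)%E]/= big_ltn // /Qf -/X.
set pre := \prod_(i' < i) _.
set K' := \prod_(i.+1 <= i' < size P) kap i'.
have pre0 : 0 <= pre by apply: prodr_ge0 => i' _; exact: heat_ge0.
have K'0 : 0 <= K' by apply: prodr_ge0 => i' _.
have ab := ltW altb.
set c := A x * pre / heat (r - l) (ap j - am j) * K' *
   (heat (r - tgrid l r P i) (ap j - X) * kap i / (b - a)).
have -> : A x * (pre * heat (r - tgrid l r P i) (ap j - X) / heat (r - l) (ap j - am j)) *
   (kap i * K') = c * (b - a).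
  by rewrite /c; field; rewrite subr_eq0 gt_eqF // lt0r_neq0.
apply: int_lb => //.
- by move=> y; apply: iint_ge0.
- rewrite /c; apply: mulr_ge0; last apply: divr_ge0; last by rewrite subr_ge0 ltW.
    by apply: mulr_ge0 => //; apply: divr_ge0 => //; [apply: mulr_ge0|exact: ltW].
  by apply: mulr_ge0 => //; exact: heat_ge0.
move=> y yab; have [By Hy] := Hab y yab.
apply: le_trans (IH i.+1 _ (upd x j i y) _ _); last first.
- move=> i'; rewrite ltnS leq_eqVlt => /orP [/eqP ->|i'i]; first by rewrite upd_eq.
  by rewrite upd_neqi; [exact: Bx | rewrite (ltn_eqF i'i)].
- exact: Oupd.
- by rewrite -inm addSnnS.
rewrite lee_fin Aupd Qf_upd //.
rewrite /c -/pre -/X -/K'.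
set hh := (heat _ _ * heat _ _).
have -> : A x * (pre * hh / heat (r - l) (ap j - am j)) * K' =
  A x * pre / heat (r - l) (ap j - am j) * K' * hh by ring.
apply: ler_wpM2l.
  by apply: mulr_ge0 => //; apply: divr_ge0 => //; [apply: mulr_ge0|exact: ltW].
by rewrite ler_pdivrMr ?subr_gt0 // [hh * _]mulrC; exact: Hy.
Qed.

Definition rowsc (m j n : nat) : seq (nat * nat) := flatten [seq rowc j' 0 m | j' <- iota j n].

Lemma bd_ge0 (R : realType) l r P am ap (x : config R) j :
  0 <= bridge_density l r P am ap x j.
Proof.
rewrite /bridge_density divr_ge0 ?heat_ge0 //.
by apply: prodr_ge0 => i _; exact: heat_ge0.
Qed.

Lemma rows_lb (R : realType) (l r : R) (P : seq R) (am ap : nat -> R) (k : nat)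
  (F : config R -> \bar R) (Bx : nat -> nat -> R -> Prop) (kap : nat -> R) :
  l < r ->
  (forall x, (0 <= F x)%E) ->
  (forall x, (forall j i, (1 <= j <= k)%N -> (i < size P)%N -> Bx j i (x j i)) ->
     ((\prod_(1 <= j < k.+1) bridge_density l r P am ap x j)%:E <= F x)%E) ->
  (forall i, 0 <= kap i) ->
  (forall j i X, (1 <= j <= k)%N -> (i < size P)%N -> (i = 0%N -> X = am j) ->
     ((0 < i)%N -> Bx j i.-1 X) ->
     exists a b, a < b /\ forall y, a <= y <= b -> Bx j i y /\
       heat (r - tgrid l r P i) (ap j - X) * kap i <=
       (b - a) * (heat (tgrid l r P i.+1 - tgrid l r P i) (y - X) *
                  heat (r - tgrid l r P i.+1) (ap j - y))) ->
  forall n j, (0 < j)%N -> (j + n = k.+1)%N -> forall x,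
  (forall j' i, (1 <= j' < j)%N -> (i < size P)%N -> Bx j' i (x j' i)) ->
  (((\prod_(1 <= j' < j) bridge_density l r P am ap x j') *
     (\prod_(0 <= i' < size P) kap i') ^+ n)%:E
     <= iint (rowsc (size P) j n) F x)%E.
Proof.
move=> lr F0 HF kap0 Hstep.
elim=> [|n IH] j j0.
  rewrite addn0 => -> x HB /=; rewrite expr0 mulr1; apply: HF => j' i /andP [j1 jk] im.
  by apply: HB => //; rewrite j1 ltnS.
move=> jn x HB.
have jk : (j <= k)%N by lia.
rewrite /rowsc /= -/(rowsc (size P) j.+1 n) -iint_cat.
set Kr := \prod_(0 <= i' < size P) kap i'.
set A := fun x : config R => (\prod_(1 <= j' < j) bridge_density l r P am ap x j') * Kr ^+ n.
have Kr0 : 0 <= Kr by apply: prodr_ge0.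
have -> : (\prod_(1 <= j' < j) bridge_density l r P am ap x j') * Kr ^+ n.+1 =
  A x * Qf l r P am ap x j 0 * Kr by rewrite Qf_0 // mulr1 /A exprSr mulrA.
apply: (@row_lb R l r P am ap j _ A
  (fun x => forall j' i, (1 <= j' < j)%N -> (i < size P)%N -> Bx j' i (x j' i))
  (Bx j) kap lr _ _ _ _ _ kap0 _ (size P) 0%N (add0n _) x HB).
- move=> x' i y; rewrite /A; congr (_ * _).
  apply: eq_big_nat => j' /andP [_ j'j]; apply: bd_ext => i'.
  by rewrite upd_neqj // ltn_eqF.
- move=> x'; rewrite /A; apply: mulr_ge0; last exact: exprn_ge0.
  by apply: prodr_ge0 => j' _; exact: bd_ge0.
- move=> x' i y Ox j' i' jj im; rewrite upd_neqj; first exact: Ox.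
  by case/andP: jj => _ /ltn_eqF ->.
- by move=> x'; apply: iint_ge0.
- move=> x' Ox Bj.
  apply: le_trans (IH j.+1 isT _ x' _); last first.
  + move=> j' i /andP [j1]; rewrite ltnS leq_eqVlt => /orP [/eqP ->|jj]; first exact: Bj.
    by apply: Ox; rewrite j1 jj.
  + by rewrite -jn addSnnS.
  by rewrite lee_fin /A big_nat_recr //= -/Kr -mulrA [Kr ^+ n * _]mulrC mulrA.
- move=> i X im h0 h1; apply: Hstep => //; by rewrite j0 jk.
- by [].
Qed.

Lemma tgrid_S (R : realType) (l r : R) P i : (i < size P)%N -> tgrid l r P i.+1 = nth 0 P i.
Proof. by move=> iP; rewrite /tgrid /= iP. Qed.

Lemma tgrid_lt (R : realType) (l r : R) P : l < r -> sorted <%R P ->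
  (forall p, p \in P -> l < p < r) ->
  forall i, (i <= size P)%N -> tgrid l r P i < tgrid l r P i.+1.
Proof.
move=> lr sP HP i iP.
case: (ltnP i (size P)) => [im|mi]; last first.
  have -> : i = size P by apply/eqP; rewrite eqn_leq iP mi.
  rewrite tgrid_end; case eP: (size P) => [|m].
    by rewrite /tgrid.
  rewrite tgrid_S ?eP //; have /HP /andP [] // : nth 0 P m \in P by rewrite mem_nth ?eP.
rewrite tgrid_S //; case: i im {iP} => [|i] im.
  by rewrite /tgrid /=; have /HP /andP [] // : nth 0 P 0 \in P by rewrite mem_nth.
rewrite tgrid_S ?(ltnW im) //.
apply: (sorted_ltn_nth lt_trans) => //; rewrite inE //; exact: ltnW.
Qed.

Lemma tgrid_ge (R : realType) (l r : R) P : l < r -> sorted <%R P ->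
  (forall p, p \in P -> l < p < r) ->
  forall i, (i <= (size P).+1)%N -> l <= tgrid l r P i.
Proof.
move=> lr sP HP; elim=> [|i IH] iP; first by rewrite /tgrid.
by apply: le_trans (IH (ltnW iP)) _; apply/ltW/tgrid_lt.
Qed.

Lemma min_lip (R : realType) (l r a b : R) : a <= b ->
  `|Num.min (a - l) (r - a) - Num.min (b - l) (r - b)| <= b - a.
Proof.
move=> ab; rewrite /Num.min.
case: ifP => h1; case: ifP => h2; rewrite ler_norml; apply/andP; split;
  move: h1 h2; rewrite ?ltxx; move=> /negbT h1 /negbT h2 || move=> h1 h2 || idtac;
  rewrite ?ltNge ?negbK in h1 h2 *; try lra.
Qed.

Lemma D_bound (R : realType) (l r t0 t1 a0 a1 L : R) (Y : R -> R) : l < r -> l <= t0 -> t0 < t1 -> t1 < r -> 0 <= L ->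
  (forall t, Y t = a0 + (a1 - a0) * ((t - l) / (r - l)) + L * Num.min (t - l) (r - t)) ->
  `|Y t0 + (t1 - t0) * (a1 - Y t0) / ((t1 - t0) + (r - t1)) - Y t1|
    <= 2 * L * ((t1 - t0) * (r - t1) / ((t1 - t0) + (r - t1))).
Proof.
move=> lr lt0 t01 t1r L0 HY.
set h0 := L * Num.min (t0 - l) (r - t0).
set h1 := L * Num.min (t1 - l) (r - t1).
have V0 : 0 < (t1 - t0) + (r - t1) by lra.
have -> : Y t0 + (t1 - t0) * (a1 - Y t0) / ((t1 - t0) + (r - t1)) - Y t1 =
  ((r - t1) * (h0 - h1) - (t1 - t0) * h1) / ((t1 - t0) + (r - t1)).
  rewrite !HY -/h0 -/h1; field.
  by rewrite !lt0r_neq0 // subr_gt0.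
have iV0 : 0 < ((t1 - t0) + (r - t1))^-1 by rewrite invr_gt0.
rewrite normrM (gtr0_norm iV0) mulrA ler_pM2r //.
have hl : `|h0 - h1| <= L * (t1 - t0).
  by rewrite /h0 /h1 -mulrBr normrM (ger0_norm L0) ler_wpM2l // min_lip // ltW.
have h10 : 0 <= h1.
  rewrite /h1 mulr_ge0 // /Num.min; case: ifP => _; lra.
have h1S : h1 <= L * (r - t1).
  rewrite /h1 ler_wpM2l // /Num.min; case: ifP => h; lra.
apply: le_trans (ler_normB _ _) _.
have rt1 : 0 <= r - t1 by lra.
have t10 : 0 <= t1 - t0 by lra.
rewrite (normrM (r - t1)) (normrM (t1 - t0)) (ger0_norm h10) (ger0_norm rt1) (ger0_norm t10).
have := ler_wpM2l rt1 hl.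
move: t1r t01 => /[dup] /ltW t1r' t1r /[dup] /ltW t01' t01.
nra.
Qed.

Lemma prod_exp (R : realType) (c a : R) (f : nat -> R) n :
  \prod_(0 <= i < n) (c * expR (- a * (f i.+1 - f i))) = c ^+ n * expR (- a * (f n - f 0%N)).
Proof.
elim: n => [|n IH]; first by rewrite big_geq // expr0 subrr mulr0 expR0 mulr1.
rewrite big_nat_recr //= IH exprSr.
set e1 := expR _; set e2 := expR _; set e3 := expR _.
have -> : e3 = e1 * e2 by rewrite /e1 /e2 /e3 -expRD; congr expR; ring.
ring.
Qed.

Definition Yf {R : realType} (l r L : R) (am ap : nat -> R) (j : nat) (t : R) : R :=
  am j + (ap j - am j) * ((t - l) / (r - l)) + L * Num.min (t - l) (r - t).

Lemma frac_le (R : realType) (a b : R) : 0 < a -> 0 < b -> a * b / (a + b) <= a.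
Proof.
move=> a0 b0; rewrite ler_pdivrMr ?addr_gt0 //.
apply: ler_wpM2l; [exact: ltW | lra].
Qed.

Lemma Hstep_lemma (R : realType) (l r T L d th : R) (P : seq R) (am ap : nat -> R) :
  l < r -> sorted <%R P ->
  (forall p, p \in P -> l < p < l + Num.sqrt T) ->
  (forall p, p \in P -> l < p < r) ->
  0 <= L -> 0 < d -> 0 < th -> th <= 1 -> th * Num.sqrt T <= d -> Num.sqrt T <= T ->
  forall j i X, (i < size P)%N -> (i = 0%N -> X = am j) ->
     ((0 < i)%N -> `|X - Yf l r L am ap j (tgrid l r P i.-1.+1)| <= d) ->
     exists a b, a < b /\ forall y, a <= y <= b ->
       `|y - Yf l r L am ap j (tgrid l r P i.+1)| <= d /\
       heat (r - tgrid l r P i) (ap j - X) *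
         (th * expR (-1 - 4 * L ^+ 2 * (tgrid l r P i.+1 - tgrid l r P i)) / Num.sqrt (2 * pi : R)) <=
       (b - a) * (heat (tgrid l r P i.+1 - tgrid l r P i) (y - X) *
                  heat (r - tgrid l r P i.+1) (ap j - y)).
Proof.
move=> lr sP HP1 HP2 L0 d0 th0 th1 thd sTT j i X im hX0 hXB.
set t0 := tgrid l r P i; set t1 := tgrid l r P i.+1.
have t01 : t0 < t1 by apply: tgrid_lt => //; exact: ltnW.
have lt0 : l <= t0 by apply: tgrid_ge => //; rewrite ltnW // ltnW.
have t1P : t1 \in P by rewrite /t1 tgrid_S // mem_nth.
have t1r : t1 < r by have /andP [] := HP2 _ t1P.
have t1s : t1 < l + Num.sqrt T by have /andP [] := HP1 _ t1P.
set tau := t1 - t0; set S := r - t1.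
have tau0 : 0 < tau by rewrite subr_gt0.
have S0 : 0 < S by rewrite subr_gt0.
have tauT : tau <= Num.sqrt T by rewrite /tau; lra.
set Y0 := Yf l r L am ap j t0; set Y1 := Yf l r L am ap j t1.
have hu : `|X - Y0| <= d.
  have [i0|ipos] := eqVneq i 0%N.
    rewrite hX0 // /Y0 /t0 i0 /Yf /tgrid /= subrr mul0r mulr0 addr0.
    have -> : Num.min 0 (r - l) = 0 by apply/min_idPl; rewrite subr_ge0 ltW.
    by rewrite mulr0 addr0 subrr normr0 ltW.
  have ip : (0 < i)%N by rewrite lt0n.
  by have := hXB ip; rewrite prednK.
have hD : `|Y0 + tau * (ap j - Y0) / (tau + S) - Y1| <= 2 * L * (tau * S / (tau + S)).
  by apply: (@D_bound R l r t0 t1 (am j) (ap j) L (Yf l r L am ap j)) => // t.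
pose sg := Num.sqrt (tau * S / (tau + S)).
pose sg' := Num.min sg d.
pose q := S / (tau + S) * (X - Y0) * (1 - sg' / (2 * d)).
have sg0 : 0 < sg by rewrite /sg sqrtr_gt0 divr_gt0 // ?mulr_gt0 // addr_gt0.
have sg'0 : 0 < sg' by rewrite lt_min sg0 d0.
have sgT : sg <= Num.sqrt T.
  rewrite ler_sqrt; last by apply: le_trans sTT; exact: sqrtr_ge0.
  have := @frac_le R tau S tau0 S0.
  lra.
have thsg : th * sg <= sg'.
  rewrite le_min; apply/andP; split; first nra.
  by apply: le_trans thd; apply: ler_wpM2l; [exact: ltW | exact: sgT].
exists (Y1 + q - sg' / 2); exists (Y1 + q + sg' / 2); split; first lra.
move=> y hy.
have hy' : `|y - (Y1 + q)| <= sg' / 2 by rewrite ler_norml; lra.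
have [hB hG] := @gauss_step R tau S X (ap j) Y0 Y1 d L y tau0 S0 d0 L0 hu hD hy'.
split; first exact: hB.
have eV : tau + S = r - t0 by rewrite /tau /S; ring.
rewrite -eV.
have e2 : forall c s : R, c + s / 2 - (c - s / 2) = s by move=> c s; field.
rewrite e2.
move: hG; rewrite -/sg -/sg' -/q.
set E := expR _; set hV := heat _ _; set hh := (heat _ _ * heat _ _) => hG.
have s2pi0 : 0 < Num.sqrt (2 * pi : R) by rewrite sqrtr_gt0 mulr_gt0 // pi_gt0.
have e3 : forall (a b c e f : R), 0 < c -> 0 < f ->
  a * (b * e / c) = a * (e / (c * f)) * (b * f).
  by move=> a b c e f c0 f0; field; rewrite !lt0r_neq0.
rewrite (e3 _ _ _ _ sg) //.
rewrite [sg' * hh]mulrC; apply: ler_pM.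
- apply: mulr_ge0; first exact: heat_ge0.
  apply: divr_ge0; first exact: ltW (expR_gt0 _).
  by apply: mulr_ge0; apply: ltW.
- by apply: mulr_ge0; apply: ltW.
- exact: hG.
- exact: thsg.
Qed.

Lemma eventH_lemma (R : realType) (k : nat) (mu lam0 lam1 T l r L d : R)
  (am ap : nat -> R) (g : R -> R) (P : seq R) (x : config R) :
  (1 <= k)%N -> l < r -> (forall p, p \in P -> l < p < r) -> g l = 0 -> g r = 0 ->
  (forall x y, l <= x <= r -> l <= y <= r -> `|g x - g y| <= L * `|x - y|) ->
  (forall j, (1 <= j < k)%N -> lam0 * Num.sqrt T <= am j - am j.+1) ->
  (forall j, (1 <= j < k)%N -> lam0 * Num.sqrt T <= ap j - ap j.+1) ->
  lam1 * T <= am k - g l -> lam1 * T <= ap k - g r ->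
  2 * d <= (1 - mu) * lam0 * Num.sqrt T -> d <= (1 - mu) * lam1 * T ->
  (forall j i, (1 <= j <= k)%N -> (i < size P)%N ->
     `|x j i - Yf l r L am ap j (tgrid l r P i.+1)| <= d) ->
  eventH k mu lam0 lam1 T g P x.
Proof.
move=> k1 lr HP gl gr glip Ham Hap Hamk Hapk hd1 hd2 Bx.
apply/allP => i; rewrite mem_iota add0n => /andP [_ im].
have pP : nth 0 P i \in P by rewrite mem_nth.
have /andP [lp pr] := HP _ pP.
set p := nth 0 P i in pP lp pr *.
have tp : tgrid l r P i.+1 = p by rewrite tgrid_S.
set s := (p - l) / (r - l).
have s0 : 0 <= s by rewrite divr_ge0 // subr_ge0 ltW.
have s1 : s <= 1 by rewrite ler_pdivrMr ?subr_gt0 // mul1r; lra.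
apply/andP; split.
  apply/allP => j; rewrite mem_iota => /andP [j1 jk].
  have jk' : (j < k)%N by move: jk; case: (k) k1 => [//|k'] _ /=; rewrite add1n.
  have B1 := Bx j i; rewrite tp in B1.
  have B2 := Bx j.+1 i; rewrite tp in B2.
  move: (B1 (ltac:(by rewrite j1 (ltnW jk'))) im) (B2 (ltac:(by rewrite jk')) im).
  rewrite !ler_norml => /andP [h1 h2] /andP [h3 h4].
  have eY : Yf l r L am ap j p - Yf l r L am ap j.+1 p =
    (am j - am j.+1) * (1 - s) + (ap j - ap j.+1) * s by rewrite /Yf /s; ring.
  have hA := Ham j (ltac:(by rewrite j1 jk')).
  have hB := Hap j (ltac:(by rewrite j1 jk')).
  have : lam0 * Num.sqrt T <= (am j - am j.+1) * (1 - s) + (ap j - ap j.+1) * s.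
    nra.
  nra.
have Bk := Bx k i; rewrite tp in Bk.
move: (Bk (ltac:(by rewrite k1 leqnn)) im); rewrite ler_norml => /andP [h1 h2].
have gp1 : g p <= L * (p - l).
  have := glip p l (ltac:(by rewrite (ltW lp) (ltW pr))) (ltac:(by rewrite lexx ltW)).
  rewrite gl subr0 (ger0_norm (ltW (ltac:(by rewrite subr_gt0) : 0 < p - l))).
  by move=> /(le_trans (ler_norm _)).
have gp2 : g p <= L * (r - p).
  have := glip p r (ltac:(by rewrite (ltW lp) (ltW pr))) (ltac:(by rewrite lexx ltW)).
  rewrite gr subr0 distrC (ger0_norm (ltW (ltac:(by rewrite subr_gt0) : 0 < r - p))).
  by move=> /(le_trans (ler_norm _)).
have gmin : g p <= L * Num.min (p - l) (r - p).
  by rewrite /Num.min; case: ifP.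
have eY : Yf l r L am ap k p = am k * (1 - s) + ap k * s + L * Num.min (p - l) (r - p).
  by rewrite /Yf /s; ring.
rewrite gl in Hamk; rewrite gr in Hapk.
have : lam1 * T <= am k * (1 - s) + ap k * s by nra.
nra.
Qed.

Theorem mainTheorem3 (R : realType) (k : nat) (b0 b1 lam0 lam1 mu : R) :
  (1 <= k)%N -> 0 < b0 -> 0 < b1 -> 0 < lam0 -> 0 < lam1 -> 0 < mu < 1 ->
  exists C : R, 0 < C /\
  forall (b2 T l r : R) (am ap : nat -> R) (g : R -> R) (P : seq R),
    0 < b2 -> 10 <= T -> l < r ->
    (* P is a finite set, listed in strictly increasing order *)
    sorted <%R P ->
    (forall p, p \in P -> l < p < l + Num.sqrt T) ->
    (forall p, p \in P -> l < p < r) ->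
    g l = 0 -> g r = 0 ->
    r - l <= b0 * T ->
    (size P)%:R <= b0 * T ->
    (forall x y, l <= x <= r -> l <= y <= r -> `|g x - g y| <= b1 * T * `|x - y|) ->
    (forall j, (1 <= j < k)%N -> lam0 * Num.sqrt T <= am j - am j.+1) ->
    (forall j, (1 <= j < k)%N -> lam0 * Num.sqrt T <= ap j - ap j.+1) ->
    lam1 * T <= am k - g l ->
    lam1 * T <= ap k - g r ->
    am 1%N - g l <= b2 * T ^+ 2 ->
    ap 1%N - g r <= b2 * T ^+ 2 ->
    ((C^-1 * expR (- (C * (T ^+ 2 * Num.sqrt T))))%:E
       <= Pfree_H k l r am ap mu lam0 lam1 T g P)%E.
Proof.
move=> k1 b00 b10 lam00 lam10 /andP [mu0 mu1].
set eps := Num.min ((1 - mu) * lam0 / 2) ((1 - mu) * lam1).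
have mu1' : 0 < 1 - mu by lra.
have eps0 : 0 < eps by rewrite lt_min !mulr_gt0.
have eps1 : eps <= (1 - mu) * lam0 / 2 by rewrite ge_min lexx.
have eps2 : eps <= (1 - mu) * lam1 by rewrite ge_min lexx orbT.
set th := Num.min 1 eps.
have th0 : 0 < th by rewrite lt_min ltr01 eps0.
have th1 : th <= 1 by rewrite ge_min lexx.
have the : th <= eps by rewrite ge_min lexx orbT.
have pi0 := pi_gt0 R.
have s2pi1 : 1 <= Num.sqrt (2 * pi : R).
  by rewrite -{1}sqrtr1 ler_sqrt; have := pi_ge2 R; lra.
set c1 := th * expR (-1) / Num.sqrt (2 * pi : R).
have c10 : 0 < c1.
  have s0 : 0 < Num.sqrt (2 * pi : R) by lra.
  by apply: divr_gt0 => //; rewrite mulr_gt0 ?expR_gt0.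
have c11 : c1 <= 1.
  rewrite /c1 ler_pdivrMr; last by lra.
  have e1 : expR (-1 : R) <= 1 by rewrite expR_le1; lra.
  have : th * expR (-1) <= 1 * 1 by by apply: ler_pM; rewrite ?(ltW th0) ?(ltW (expR_gt0 _)).
  lra.
have lnc1 : ln c1 <= 0 by exact: ln_le0.
set C := 1 + k%:R * b0 * (- ln c1) + 4 * k%:R * b1 ^+ 2.
have k0 : 0 <= k%:R :> R by exact: ler0n.
have C1 : 1 <= C.
  have h1 : 0 <= k%:R * b0 * (- ln c1) by rewrite mulr_ge0 ?mulr_ge0 ?(ltW b00) //; lra.
  have h2 : 0 <= 4 * k%:R * b1 ^+ 2 by apply: mulr_ge0; [apply: mulr_ge0 | exact: sqr_ge0].
  rewrite /C; lra.
exists C; split; first lra.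
move=> b2 T l r am ap g P b20 T10 lr sP HP1 HP2 gl gr rl0 mb0 glip Ham Hap Hamk Hapk _ _.
have T1 : 1 <= T by lra.
set sT := Num.sqrt T.
have sT1 : 1 <= sT by rewrite -sqrtr1 ler_sqrt //; lra.
have sTsq : sT ^+ 2 = T by rewrite sqr_sqrtr //; lra.
have sTT : sT <= T by nra.
set L := b1 * T.
have L0 : 0 <= L by rewrite mulr_ge0 //; lra.
set d := eps * sT.
have d0 : 0 < d by rewrite mulr_gt0 //; lra.
set kap := fun i => th * expR (-1 - 4 * L ^+ 2 * (tgrid l r P i.+1 - tgrid l r P i)) / Num.sqrt (2 * pi : R).
set F := fun x : config R => (if eventH k mu lam0 lam1 T g P x
               then \prod_(1 <= j < k.+1) bridge_density l r P am ap x j else 0)%:E.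
set Bx := fun j i v => `|v - Yf l r L am ap j (tgrid l r P i.+1)| <= d.
have kap0 : forall i, 0 <= kap i.
  move=> i; rewrite /kap divr_ge0 ?mulr_ge0 ?(ltW th0) ?(ltW (expR_gt0 _)) //; lra.
have F0 : forall x, (0 <= F x)%E.
  move=> x; rewrite /F lee_fin; case: ifP => // _.
  by apply: prodr_ge0 => j _; exact: bd_ge0.
have HF : forall x, (forall j i, (1 <= j <= k)%N -> (i < size P)%N -> Bx j i (x j i)) ->
     ((\prod_(1 <= j < k.+1) bridge_density l r P am ap x j)%:E <= F x)%E.
  move=> x HB; rewrite /F.
  have hd1 : 2 * d <= (1 - mu) * lam0 * sT.
    have : eps * 2 <= (1 - mu) * lam0 by rewrite -ler_pdivlMr.
    rewrite /d; nra.
  have hd2 : d <= (1 - mu) * lam1 * T.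
    have : (1 - mu) * lam1 * sT <= (1 - mu) * lam1 * T.
      by apply: ler_wpM2l => //; apply: mulr_ge0; apply: ltW.
    have : eps * sT <= (1 - mu) * lam1 * sT by apply: ler_wpM2r => //; lra.
    rewrite /d; lra.
  by rewrite (@eventH_lemma R k mu lam0 lam1 T l r L d am ap g P x k1 lr HP2 gl gr glip Ham Hap Hamk Hapk hd1 hd2 HB).
have Hstep : forall j i X, (1 <= j <= k)%N -> (i < size P)%N -> (i = 0%N -> X = am j) ->
     ((0 < i)%N -> Bx j i.-1 X) ->
     exists a b, a < b /\ forall y, a <= y <= b -> Bx j i y /\
       heat (r - tgrid l r P i) (ap j - X) * kap i <=
       (b - a) * (heat (tgrid l r P i.+1 - tgrid l r P i) (y - X) *
                  heat (r - tgrid l r P i.+1) (ap j - y)).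
  have thd : th * sT <= d by rewrite /d; apply: ler_wpM2r => //; lra.
  move=> j i X _ im h0 h1.
  exact: (@Hstep_lemma R l r T L d th P am ap lr sP HP1 HP2 L0 d0 th0 th1 thd sTT j i X im h0 h1).
have vac : forall j' i, (1 <= j' < 1)%N -> (i < size P)%N -> Bx j' i ((fun _ _ => 0 : R) j' i).
  by move=> j' i /andP [h1 h2]; rewrite ltnNge h1 in h2.
have main := @rows_lb R l r P am ap k F (fun j i v => is_true (Bx j i v)) kap lr F0 HF kap0 Hstep k 1 isT (add1n k) (fun _ _ => 0) vac.
rewrite /Pfree_H.
have -> : coords k (size P) = rowsc (size P) 1 k by [].
apply: le_trans main.
rewrite big_geq // mul1r lee_fin.
have kapE : forall i, kap i = c1 * expR (- (4 * L ^+ 2) * (tgrid l r P i.+1 - tgrid l r P i)).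
  move=> i; rewrite /kap /c1.
  have -> : -1 - 4 * L ^+ 2 * (tgrid l r P i.+1 - tgrid l r P i) =
    -1 + (- (4 * L ^+ 2) * (tgrid l r P i.+1 - tgrid l r P i)) by ring.
  rewrite expRD; ring.
rewrite (eq_big_nat _ _ (fun i _ => kapE i)) prod_exp.
set tm := tgrid l r P (size P) - tgrid l r P 0.
have tm0 : 0 <= tm.
  rewrite /tm subr_ge0 {2}/tgrid /=; apply: tgrid_ge => //; exact: leqnSn.
have tmT : tm <= sT.
  rewrite /tm {2}/tgrid /=; case eP: (size P) => [|m]; first by rewrite /tgrid /=; lra.
  rewrite tgrid_S ?eP //.
  have /HP1 /andP [_ h] : nth 0 P m \in P by rewrite mem_nth ?eP.
  rewrite -/sT in h; lra.
set m := size P.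
have -> : c1 ^+ m * expR (- (4 * L ^+ 2) * tm) = expR (m%:R * ln c1 - 4 * L ^+ 2 * tm).
  by rewrite expRD expRM_natl lnK ?posrE // mulNr.
rewrite -expRM_natl.
set Q := T ^+ 2 * sT.
have QT : T <= Q.
  have h1 : T <= T ^+ 2 by rewrite expr2; nra.
  have h2 : T ^+ 2 * 1 <= T ^+ 2 * sT by rewrite ler_wpM2l ?sqr_ge0.
  rewrite /Q; lra.
have C0 : 0 < C by lra.
have Cinv : C^-1 <= 1 by rewrite invf_le1.
apply: le_trans (_ : expR (- (C * Q)) <= _).
  rewrite -[X in _ <= X]mul1r; apply: ler_wpM2r; [exact: ltW (expR_gt0 _) | exact: Cinv].
rewrite ler_expR.
have hm : m%:R * ln c1 >= b0 * Q * ln c1.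
  have : m%:R <= b0 * Q by nra.
  nra.
have hL : L ^+ 2 * tm <= b1 ^+ 2 * Q.
  rewrite /L /Q exprMn -mulrA ler_wpM2l ?sqr_ge0 // ler_wpM2l ?sqr_ge0 //.
have hk : k%:R * (b0 * Q * ln c1 - 4 * (b1 ^+ 2 * Q)) >= - (C * Q).
  rewrite /C. have Q0 : 0 <= Q by lra. nra.
have : k%:R * (m%:R * ln c1 - 4 * L ^+ 2 * tm) >= k%:R * (b0 * Q * ln c1 - 4 * (b1 ^+ 2 * Q)).
  apply: ler_wpM2l => //; lra.
lra.
Qed.
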